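(* For every set $A \subseteq \mathbb{N}$, $$\underline{\underline{d}}(A) = d_*(A) \qquad\text{and}\qquad \overline{\overline{d}}(A) = d^*(A).$$
   Context: $\mathbb{N}=\{1,2,3,\dots\}$. For $A\subseteq\mathbb{N}$ let $A(n)=|A\cap[1,n]|$. Let $\mathcal{D}$ be the collection of all $A\subseteq\mathbb{N}$ for which the asymptotic density $d(A)=\lim_{n\to\infty}\frac{A(n)}{n}$ exists. Define $\underline{\underline{d}}(A)=\sup\{d(B);\ B\subseteq A,\ B\in\mathcal{D}\}$ and $\overline{\overline{d}}(A)=\inf\{d(C);\ C\supseteq A,\ C\in\mathcal{D}\}$. Define $d_*(A)=\sup \frac{\sum_{i=1}^{p}d(A_i)-\sum_{j=1}^{q}d(B_j)}{k}$, where the supremum is over all finite collections $A_1,\dots,A_p,B_1,\dots,B_q$ of sets in $\mathcal{D}$ and positive integers $k$ such that $k\chi_A+\sum_{j=1}^q\chi_{B_j}\ge\sum_{i=1}^p\chi_{A_i}$ pointwise on $\mathbb{N}$ ($\chi$ denotes the characteristic function). Define $d^*(A)=\inf \frac{\sum_{i=1}^{p}d(A_i)-\sum_{j=1}^{q}d(B_j)}{k}$, the infimum over all finite collections $A_1,\dots,A_p,B_1,\dots,B_q\in\mathcal{D}$ and positive integers $k$ such that $k\chi_A+\sum_{j=1}^q\chi_{B_j}\le\sum_{i=1}^p\chi_{A_i}$ pointwise. *)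

(* Defs.v *)
From HB Require Import structures.
From mathcomp Require Import all_boot all_order all_algebra.
From mathcomp Require Import all_classical all_reals all_analysis.
Set Implicit Arguments. Unset Strict Implicit. Unset Printing Implicit Defensive.
Import Order.TTheory GRing.Theory Num.Theory.
Import numFieldNormedType.Exports.
Local Open Scope classical_set_scope.
Local Open Scope ring_scope.

(* N = {1,2,3,...} is represented as the positive naturals. *)
Definition posn : set nat := [set n | (0 < n)%N].

Definition cnt (R : realType) (A : set nat) (n : nat) : R :=
  \sum_(1 <= i < n.+1) (\1_A i : R).

Definition has_density (R : realType) (A : set nat) (l : R) : Prop :=
  (fun n : nat => @cnt R A n / n%:R) @ \oo --> l.

Definition inD (R : realType) (B : set nat) (l : R) : Prop :=
  B `<=` posn /\ has_density B l.

Definition lower_vals (R : realType) (A : set nat) : set R :=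
  [set x | exists B, B `<=` A /\ inD B x].

Definition upper_vals (R : realType) (A : set nat) : set R :=
  [set x | exists C, A `<=` C /\ inD C x].

Definition all_inD (R : realType) (s : seq (set nat * R)) : Prop :=
  forall p, p \in s -> inD p.1 p.2.

Definition sum_chi (R : realType) (s : seq (set nat * R)) (n : nat) : R :=
  \sum_(p <- s) (\1_(p.1) n : R).

Definition sum_d (R : realType) (s : seq (set nat * R)) : R :=
  \sum_(p <- s) p.2.

Definition dstar_lower_vals (R : realType) (A : set nat) : set R :=
  [set x | exists (As Bs : seq (set nat * R)) (k : nat),
     (0 < k)%N /\ all_inD As /\ all_inD Bs /\
     (forall n, (0 < n)%N ->
        sum_chi As n <= k%:R * (\1_A n : R) + sum_chi Bs n) /\
     x = (sum_d As - sum_d Bs) / k%:R].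

Definition dstar_upper_vals (R : realType) (A : set nat) : set R :=
  [set x | exists (As Bs : seq (set nat * R)) (k : nat),
     (0 < k)%N /\ all_inD As /\ all_inD Bs /\
     (forall n, (0 < n)%N ->
        k%:R * (\1_A n : R) + sum_chi Bs n <= sum_chi As n) /\
     x = (sum_d As - sum_d Bs) / k%:R].

Definition ddlower (R : realType) (A : set nat) : R := sup (@lower_vals R A).
Definition ddupper (R : realType) (A : set nat) : R := inf (@upper_vals R A).
Definition dlow_star (R : realType) (A : set nat) : R := sup (@dstar_lower_vals R A).
Definition dup_star (R : realType) (A : set nat) : R := inf (@dstar_upper_vals R A).

(* Main.v *)
Require Import Defs.
From mathcomp Require Import all_boot all_order all_algebra.
From mathcomp Require Import all_classical all_reals all_analysis.
From mathcomp Require Import lra.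
Set Implicit Arguments. Unset Strict Implicit. Unset Printing Implicit Defensive.
Import Order.TTheory GRing.Theory Num.Theory.
Import numFieldNormedType.Exports.
Local Open Scope classical_set_scope.
Local Open Scope ring_scope.

Section S.
Variable R : realType.

Lemma epsN (u : nat -> R) l : u @ \oo --> l <->
  forall e, 0 < e -> exists N, forall n, (N <= n)%N -> `|l - u n| < e.
Proof.
rewrite cvgrPdist_lt; split => H e e0.
  by case: (H e e0) => N _ HN; exists N.
by case: (H e e0) => N HN; exists N.
Qed.

Lemma cnt0 (A : set nat) : cnt R A 0 = 0.
Proof. by rewrite /cnt big_geq. Qed.

Lemma cntS (A : set nat) n : cnt R A n.+1 = cnt R A n + \1_A n.+1.
Proof. by rewrite /cnt big_nat_recr. Qed.

Lemma indic01 (A : set nat) n : 0 <= (\1_A n : R) <= 1.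
Proof. rewrite indicE; case: (n \in A); by rewrite /= ?lexx ?ler01. Qed.

Lemma largeN (r : R) : exists N, forall n, (N <= n)%N -> r <= n%:R.
Proof. have := nbhs_infty_ger r. rewrite nearE /=. move=> [N _ HN]; by exists N. Qed.


Fixpoint gc (S : set nat) (F : nat -> R) (n : nat) : nat :=
  match n with
  | 0 => 0%N
  | m.+1 => if (m.+1 \in S) && ((gc S F m)%:R < F m.+1) then (gc S F m).+1 else gc S F m
  end.

Definition gset (S : set nat) (F : nat -> R) : set nat :=
  [set n | (0 < n)%N /\ n \in S /\ (gc S F n.-1)%:R < F n].

Lemma cnt_gset S F n : cnt R (gset S F) n = (gc S F n)%:R.
Proof.
elim: n => [|n IH]; first by rewrite cnt0.
rewrite cntS IH /= indicE.
have -> : (n.+1 \in gset S F) = (n.+1 \in S) && ((gc S F n)%:R < F n.+1).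
  apply/idP/idP.
    by rewrite inE => -[_ [-> /= ->]].
  by move=> /andP[h1 h2]; rewrite inE; split.
by case: ifP => _ /=; rewrite ?addr0 ?natr1.
Qed.

Lemma gc_inv1 S F : F 0 = 0 -> (forall n, F n.+1 - F n <= \1_S n.+1) ->
  forall n, F n - 1 <= (gc S F n)%:R.
Proof.
move=> F0 Hinc; elim => [|n IH]; first by rewrite F0 /=; lra.
have := Hinc n; rewrite /= indicE.
case: (boolP (n.+1 \in S)) => hS /=.
  case: ifP => hlt /=.
    rewrite -natr1 /=; lra.
  move/negbT: hlt; rewrite -leNgt => hle _; lra.
move=> h.
have hh : F n.+1 <= F n by lra.
lra.
Qed.

Lemma gc_inv2 S F n : gc S F n = 0%N \/
  exists m, [/\ (0 < m)%N, (m <= n)%N & (gc S F n)%:R < F m + 1].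
Proof.
elim: n => [|n IH]; first by left.
rewrite /=; case: ifP => [/andP[_ h]|_].
  right; exists n.+1; split => //; rewrite -natr1; lra.
case: IH => [->|[m [h1 h2 h3]]]; first by left.
by right; exists m; split => //; rewrite (leq_trans h2).
Qed.

Lemma Fle S (F : nat -> R) : F 0 = 0 -> (forall n, F n.+1 - F n <= \1_S n.+1) ->
  forall n, F n <= n%:R.
Proof.
move=> F0 Hinc; elim => [|n IH]; first by rewrite F0.
have := Hinc n; have := indic01 S n.+1; rewrite -[n.+1%:R]natr1; lra.
Qed.


Lemma distdiv (a x e z : R) : 0 < z ->
  (`|a - x / z| < e) = ((a - e) * z < x < (a + e) * z).
Proof.
move=> z0; rewrite ltr_distlC ltr_pdivlMr // ltr_pdivrMr //.
Qed.

Lemma greedy S (F : nat -> R) (a : R) : 0 <= a -> F 0 = 0 ->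
  (forall n, F n.+1 - F n <= \1_S n.+1) ->
  (fun n => F n / n%:R) @ \oo --> a -> has_density (gset S F) a.
Proof.
move=> a0 F0 Hinc /epsN HF; rewrite /has_density.
under eq_fun do rewrite cnt_gset.
apply/epsN => e e0.
have e2 : 0 < e / 2 by rewrite divr_gt0.
have [N1 HN1] := HF (e/2) e2.
have [N2 HN2] := largeN (2 * (N1%:R + 1) / e + 1).
exists (maxn (maxn N1 N2) 1) => n; rewrite !geq_max => /andP[/andP[hN1 hN2] hn1].
have npos : 0 < (n%:R : R) by rewrite ltr0n.
have Hr := HN2 n hN2.
have key1 : 2 * (N1%:R + 1) < n%:R * e.
  by rewrite -ltr_pdivrMr //; lra.
have := HN1 n hN1; rewrite distdiv // => /andP[hF1 hF2].
rewrite distdiv //.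
have Hg1 := gc_inv1 F0 Hinc n.
have N10 : (0 : R) <= N1%:R by rewrite ler0n.
apply/andP; split.
  move: hF1; rewrite !mulrBl; move=> hF1; nra.
case: (gc_inv2 S F n) => [->|[m [hm0 hmn hm]]].
  by rewrite mulr_gt0 //; lra.
case: (leqP N1 m) => hNm.
  have := HN1 m hNm; rewrite distdiv ?ltr0n // => /andP[_ hFm].
  have hmn' : (m%:R : R) <= n%:R by rewrite ler_nat.
  have : (a + e/2) * m%:R <= (a + e/2) * n%:R by rewrite ler_wpM2l //; lra.
  nra.
have hFm := Fle F0 Hinc m.
have hmN : (m%:R : R) <= N1%:R by rewrite ler_nat ltnW.
nra.
Qed.


Lemma eventually_eq (u v : nat -> R) (l : R) :
  (forall n, (0 < n)%N -> u n = v n) -> v @ \oo --> l -> u @ \oo --> l.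
Proof.
move=> huv /epsN Hv; apply/epsN => e e0.
have [N HN] := Hv e e0; exists (maxn N 1) => n; rewrite geq_max => /andP[h1 h2].
by rewrite huv //; apply: HN.
Qed.

Lemma sum_cvg (As : seq (set nat * R)) : all_inD As ->
  (fun n => (\sum_(p <- As) cnt R p.1 n) / n%:R) @ \oo --> sum_d As.
Proof.
rewrite /sum_d; elim: As => [|p s IH] H.
  under eq_fun do rewrite big_nil mul0r.
  by rewrite big_nil; apply: cvg_cst.
under eq_fun do rewrite big_cons mulrDl.
rewrite big_cons; apply: cvgD.
  by have [_ ] := H p (mem_head _ _).
by apply: IH => q hq; apply: H; rewrite inE hq orbT.
Qed.

Lemma sum_cntS (As : seq (set nat * R)) n :
  \sum_(p <- As) cnt R p.1 n.+1 = \sum_(p <- As) cnt R p.1 n + sum_chi As n.+1.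
Proof. by rewrite /sum_chi -big_split /=; apply: eq_bigr => p _; rewrite cntS. Qed.

Lemma sum_cnt0 (As : seq (set nat * R)) : \sum_(p <- As) cnt R p.1 0 = 0.
Proof. by rewrite big1 // => p _; rewrite cnt0. Qed.

Definition Fd (As Bs : seq (set nat * R)) (k : nat) (n : nat) : R :=
  (\sum_(p <- As) cnt R p.1 n - \sum_(p <- Bs) cnt R p.1 n) / k%:R.

Lemma Fd0 As Bs k : Fd As Bs k 0 = 0.
Proof. by rewrite /Fd !sum_cnt0 subrr mul0r. Qed.

Lemma FdS As Bs k n : Fd As Bs k n.+1 - Fd As Bs k n =
  (sum_chi As n.+1 - sum_chi Bs n.+1) / k%:R.
Proof. rewrite /Fd !sum_cntS -mulrBl; congr (_ * _); lra. Qed.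

Lemma Fd_cvg As Bs k : all_inD As -> all_inD Bs ->
  (fun n => Fd As Bs k n / n%:R) @ \oo --> (sum_d As - sum_d Bs) / k%:R.
Proof.
move=> hA hB.
suff -> : (fun n => Fd As Bs k n / n%:R) = (fun n => ((\sum_(p <- As) cnt R p.1 n) / n%:R
   - (\sum_(p <- Bs) cnt R p.1 n) / n%:R) / k%:R).
  by apply: cvgMr_tmp; apply: cvgB; apply: sum_cvg.
apply/funext => n; rewrite /Fd -mulrBl -!mulrA; congr (_ * _); exact: mulrC.
Qed.

Lemma cnt_bounds (B : set nat) n : 0 <= cnt R B n <= n%:R.
Proof.
elim: n => [|n IH]; first by rewrite cnt0 lexx.
rewrite cntS -[n.+1%:R]natr1; have := indic01 B n.+1; lra.
Qed.

Lemma dens_bounds (B : set nat) (l : R) : has_density B l -> 0 <= l <= 1.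
Proof.
move=> /epsN H.
have H1 : forall n, (0 < n)%N -> 0 <= cnt R B n / n%:R <= 1.
  move=> n n0; have := cnt_bounds B n => /andP[h1 h2].
  rewrite divr_ge0 ?ler0n //= ler_pdivrMr ?ltr0n // mul1r //.
apply/andP; split; rewrite leNgt; apply/negP => hl.
  have [|N HN] := H (- l); first lra.
  have := HN (maxn N 1) (leq_maxl _ _); have := H1 (maxn N 1) (leq_maxr _ _).
  rewrite ltr_distlC; lra.
have [|N HN] := H (l - 1); first lra.
have := HN (maxn N 1) (leq_maxl _ _); have := H1 (maxn N 1) (leq_maxr _ _).
rewrite ltr_distlC; lra.
Qed.

Lemma dens_set0 : has_density (@set0 nat) (0 : R).
Proof.
apply: (@eventually_eq _ (fun _ => 0)); last exact: cvg_cst.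
move=> n _; suff -> : cnt R set0 n = 0 by rewrite mul0r.
by elim: n => [|n IH]; rewrite ?cnt0 // cntS IH indicE in_set0 addr0.
Qed.

Lemma cnt_posn n : cnt R posn n = n%:R.
Proof.
elim: n => [|n IH]; first by rewrite cnt0.
by rewrite cntS IH indicE mem_set //= natr1.
Qed.

Lemma dens_posn : has_density posn (1 : R).
Proof.
apply: (@eventually_eq _ (fun _ => 1)); last exact: cvg_cst.
by move=> n n0; rewrite cnt_posn divff // pnatr_eq0 -lt0n.
Qed.

Lemma cnt_compl (B : set nat) n : B `<=` posn ->
  cnt R (posn `\` B) n = n%:R - cnt R B n.
Proof.
move=> hB; elim: n => [|n IH]; first by rewrite !cnt0 subrr.
rewrite !cntS IH !indicE -[n.+1%:R]natr1.
case: (boolP (n.+1 \in B)) => hb.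
  rewrite memNset /=; first lra.
  by move=> [_]; apply; apply: set_mem.
rewrite mem_set /=; first lra.
by split => //; move=> /mem_set h; rewrite h in hb.
Qed.

Lemma dens_compl (B : set nat) (l : R) : B `<=` posn -> has_density B l ->
  has_density (posn `\` B) (1 - l).
Proof.
move=> hB hl; apply: (@eventually_eq _ (fun n => 1 - cnt R B n / n%:R)).
  by move=> n n0; rewrite cnt_compl // mulrBl divff // pnatr_eq0 -lt0n.
by apply: cvgB => //; apply: cvg_cst.
Qed.

End S.

Lemma indic_le (R : realType) (B A : set nat) n : B `<=` A -> (\1_B n : R) <= \1_A n.
Proof.
move=> hBA; rewrite !indicE; case: (boolP (n \in B)) => hb /=.
  by rewrite mem_set //=; apply: hBA; apply: set_mem.
by case: (n \in A).
Qed.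

Lemma seq1_inD (R : realType) (B : set nat) (x : R) : inD B x -> all_inD [:: (B, x)].
Proof. by move=> h p; rewrite mem_seq1 => /eqP ->. Qed.

Lemma sum_chi1 (R : realType) (B : set nat) (x : R) n : sum_chi [:: (B, x)] n = \1_B n.
Proof. by rewrite /sum_chi big_seq1. Qed.

Lemma sum_chi0 (R : realType) n : sum_chi ([::] : seq (set nat * R)) n = 0.
Proof. by rewrite /sum_chi big_nil. Qed.

Lemma sum_d1 (R : realType) (B : set nat) (x : R) : sum_d [:: (B, x)] = x.
Proof. by rewrite /sum_d big_seq1. Qed.

Lemma sum_d0 (R : realType) : sum_d ([::] : seq (set nat * R)) = 0.
Proof. by rewrite /sum_d big_nil. Qed.

Unset Implicit Arguments.
Theorem theorem3p2 (R : realType) (A : set nat) (hA : A `<=` posn) :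
  @ddlower R A = @dlow_star R A /\ @ddupper R A = @dup_star R A.
Proof.
split.
- rewrite /ddlower /dlow_star.
  set X := lower_vals A; set Y := dstar_lower_vals A.
  have hX0 : X 0 by exists set0; split => //; split; [exact: sub0set | exact: dens_set0].
  have hXub : has_ubound X.
    exists 1 => x [B [_ [_ hB]]]; by have /andP[] := dens_bounds hB.
  have hXY : X `<=` Y.
    move=> x [B [hBA hB]]; exists [:: (B, x)], [::], 1%N; split => //; split.
      exact: seq1_inD.
    split => //; split.
      by move=> n _; rewrite sum_chi1 sum_chi0 addr0 mul1r; apply: indic_le.
    by rewrite sum_d1 sum_d0 subr0 divr1.
  have hY : forall y, Y y -> y <= sup X.
    move=> y [As [Bs [k [k0 [hAs [hBs [hle ->]]]]]]].
    set y0 := (sum_d As - sum_d Bs) / k%:R.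
    have hsX := ub_le_sup hXub.
    case: (leP y0 0) => hy; first by apply: le_trans hy _; apply: hsX.
    apply: hsX; exists (gset A (Fd As Bs k)); split; first by move=> n [_ [/set_mem h _]].
    split; first by move=> n [].
    apply: greedy; first exact: ltW.
    - exact: Fd0.
    - move=> n; rewrite FdS ler_pdivrMr ?ltr0n //; have := hle n.+1 isT.
      rewrite mulrC; lra.
    - exact: Fd_cvg.
  apply/le_anti/andP; split.
    apply: ge_sup; first by exists 0.
    move=> x hx; apply: (ub_le_sup _ (hXY _ hx)).
    by exists (sup X).
  apply: ge_sup; first by exists 0; apply: hXY.
  exact: hY.
- rewrite /ddupper /dup_star.
  set X := upper_vals A; set Y := dstar_upper_vals A.
  have hX1 : X 1 by exists posn; split => //; split => //; exact: dens_posn.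
  have hXlb : has_lbound X.
    exists 0 => x [C [_ [_ hC]]]; by have /andP[] := dens_bounds hC.
  have hXY : X `<=` Y.
    move=> x [C [hAC hC]]; exists [:: (C, x)], [::], 1%N; split => //; split.
      exact: seq1_inD.
    split => //; split.
      by move=> n _; rewrite sum_chi1 sum_chi0 addr0 mul1r; apply: indic_le.
    by rewrite sum_d1 sum_d0 subr0 divr1.
  have hY : forall y, Y y -> inf X <= y.
    move=> y [As [Bs [k [k0 [hAs [hBs [hle ->]]]]]]].
    set y0 := (sum_d As - sum_d Bs) / k%:R.
    have hiX := ge_inf hXlb.
    case: (leP 1 y0) => hy; first by apply: le_trans _ hy; apply: hiX.
    set F := fun n => n%:R - Fd As Bs k n.
    have hd : has_density (gset (~` A) F) (1 - y0).
      apply: greedy.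
      - lra.
      - by rewrite /F Fd0 subrr.
      - move=> n; rewrite /F.
        have -> : n.+1%:R - Fd As Bs k n.+1 - (n%:R - Fd As Bs k n) =
          1 - (Fd As Bs k n.+1 - Fd As Bs k n) by rewrite -natr1; lra.
        rewrite FdS.
        have : (\1_A n.+1 : R) <= (sum_chi As n.+1 - sum_chi Bs n.+1) / k%:R.
          rewrite ler_pdivlMr ?ltr0n //; have := hle n.+1 isT; rewrite mulrC; lra.
        rewrite indicC indicE /=; case: (n.+1 \in A) => /=; lra.
      - apply: (@eventually_eq _ _ (fun n => 1 - Fd As Bs k n / n%:R)).
          by move=> n n0; rewrite /F mulrBl divff // pnatr_eq0 -lt0n.
        by apply: cvgB; [apply: cvg_cst | apply: Fd_cvg].
    have hgp : gset (~` A) F `<=` posn by move=> n [].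
    apply: hiX; exists (posn `\` gset (~` A) F); split.
      move=> n hn; split; first exact: hA.
      by move=> [_ [/set_mem h _]]; apply: h.
    split; first by move=> n [].
    have := dens_compl hgp hd; by rewrite subKr.
  apply/le_anti/andP; split.
    apply: lb_le_inf; first by exists 1; apply: hXY.
    exact: hY.
  apply: lb_le_inf; first by exists 1.
  move=> x hx; apply: (ge_inf _ (hXY _ hx)).
  by exists (inf X).
Qed.
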